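(* Let $\Lambda$ be a finitely aligned left cancellative small category and $v\in\Lambda^0$. (1) For $C\in v\Lambda^*$ let $H(C)=\{\alpha\in v\Lambda:\alpha\Lambda\in C\}$. Then $C\mapsto H(C)$ is a bijection from $v\Lambda^*$ onto the set of directed hereditary subsets of $v\Lambda$, with inverse $H\mapsto\{E\in\mathcal D^{(0)}_v: E\supseteq\alpha\Lambda\text{ for some }\alpha\in H\}$; moreover $C_1\subseteq C_2$ iff $H(C_1)\subseteq H(C_2)$. (2) For $C\in v\Lambda^*$, the ultrafilter $\mathcal U_C$ in $\mathcal A_v$ corresponding to $C$ equals $\{A\in\mathcal A_v: A\supseteq H(C)\cap\alpha\Lambda\text{ for some }\alpha\in H(C)\}$.
   Context: A left cancellative small category (LCSC) is a small category $\Lambda$ such that $\alpha\beta=\alpha\gamma$ implies $\beta=\gamma$. Morphisms are composed as $\alpha\beta$ when $s(\alpha)=r(\beta)$; $\Lambda^0$ is the set of objects (identity morphisms); $v\Lambda=\{\alpha:r(\alpha)=v\}$; $\alpha\Lambda=\{\alpha\beta:r(\beta)=s(\alpha)\}$. $\Lambda$ is finitely aligned if for all $\alpha,\beta$ there is finite $G$ with $\alpha\Lambda\cap\beta\Lambda=\bigcup_{\varepsilon\in G}\varepsilon\Lambda$. For $\alpha\in\Lambda$, $\tau^\alpha(\beta)=\alpha\beta$ on $s(\alpha)\Lambda$ and $\sigma^\alpha:\alpha\Lambda\to s(\alpha)\Lambda$ is its inverse. A zigzag is a tuple $\zeta=(\alpha_1,\beta_1,\dots,\alpha_n,\beta_n)$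 with $r(\alpha_i)=r(\beta_i)$ and $s(\alpha_{i+1})=s(\beta_i)$; $s(\zeta)=s(\beta_n)$, $\mathcal Zv=\{\zeta:s(\zeta)=v\}$; $\varphi_\zeta=\sigma^{\alpha_1}\circ\tau^{\beta_1}\circ\cdots\circ\sigma^{\alpha_n}\circ\tau^{\beta_n}$ (partial map) with domain $A(\zeta)$. $\mathcal D^{(0)}_v$ is the set of nonempty $A(\zeta)$, $\zeta\in\mathcal Zv$ (it contains $\alpha\Lambda$ for $\alpha\in v\Lambda$), and $\mathcal A_v$ is the ring of sets generated by $\mathcal D^{(0)}_v$. A filter in $\mathcal D^{(0)}_v$ is a nonempty $C\subseteq\mathcal D^{(0)}_v$ closed under intersection and under supersets within $\mathcal D^{(0)}_v$; a finite $\mathcal F\subseteq\mathcal D^{(0)}_v$ covers $C$ if some $E\in C$ satisfies $E\subseteq\bigcup\mathcal F$; $v\Lambda^*$ is the set of filters $C$ in $\mathcal D^{(0)}_v$ such that every finite $\mathcal F\subseteq\mathcal D^{(0)}_v$ with $\mathcal F\cap C=\varnothing$ does not cover $C$. For $C\in v\Lambda^*$, $\mathcal U_C$ denotes the unique ultrafilter $\mathcal U$ of the ring $\mathcal A_v$ with $\mathcal U\cap\mathcal D^{(0)}_v=C$ (it is generated by the sets $E\setminus\bigcup\mathcal F$ with $E\in C$ and $\mathcal F$ finite not covering $C$). A nonempty $H\subseteq\Lambda$ is directed if $H\cap\alpha\Lambda\cap\beta\Lambda\ne\varnothing$ for all $\alpha,\beta\in H$, and hereditary if $\gamma\in H$ whenever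 $\alpha\in H$ and $\alpha\in\gamma\Lambda$. *)

(* Defs.v *)
From Stdlib Require Import List.
Import ListNotations.
Set Implicit Arguments.

(** Small category, objects as a separate type; [dom] = source s, [cod] = range r.
    Composition [comp a b] = a b is meaningful when [dom a = cod b]. *)
Record LCSC := {
  Obj : Type;
  Mor : Type;
  idm : Obj -> Mor;
  dom : Mor -> Obj;
  cod : Mor -> Obj;
  comp : Mor -> Mor -> Mor;
  idm_dom : forall v, dom (idm v) = v;
  idm_cod : forall v, cod (idm v) = v;
  comp_dom : forall a b, dom a = cod b -> dom (comp a b) = dom b;
  comp_cod : forall a b, dom a = cod b -> cod (comp a b) = cod a;
  comp_assoc : forall a b c, dom a = cod b -> dom b = cod c ->
      comp (comp a b) c = comp a (comp b c);
  comp_id_l : forall a, comp (idm (cod a)) a = a;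
  comp_id_r : forall a, comp a (idm (dom a)) = a;
  left_cancel : forall a b c, dom a = cod b -> dom a = cod c ->
      comp a b = comp a c -> b = c
}.

Arguments idm {_}.
Arguments dom {_}.
Arguments cod {_}.
Arguments comp {_}.

Section Defs.
Context {L : LCSC}.

Definition mset := Mor L -> Prop.
Definition msetI (A B : mset) : mset := fun x => A x /\ B x.
Definition msetU (A B : mset) : mset := fun x => A x \/ B x.
Definition msetD (A B : mset) : mset := fun x => A x /\ ~ B x.
Definition mset0 : mset := fun _ => False.
Definition msubset (A B : mset) : Prop := forall x, A x -> B x.
Definition bigU (F : list mset) : mset := fun x => exists E, In E F /\ E x.

Definition vL (v : Obj L) : mset := fun a => cod a = v.
Definition aL (a : Mor L) : mset :=
  fun g => exists b, cod b = dom a /\ g = comp a b.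

Definition finitely_aligned : Prop :=
  forall a b : Mor L, exists G : list (Mor L),
    forall g, (aL a g /\ aL b g) <-> exists e, In e G /\ aL e g.

(** Zigzags: lists [(α_1,β_1); ...; (α_n,β_n)]. *)
Fixpoint zz_ok (z : list (Mor L * Mor L)) : Prop :=
  match z with
  | [] => True
  | (a, b) :: z' =>
      cod a = cod b /\
      match z' with [] => True | (a', _) :: _ => dom a' = dom b end /\
      zz_ok z'
  end.

(** ζ is a zigzag with s(ζ) = v (in particular nonempty). *)
Definition zigzag_at (v : Obj L) (z : list (Mor L * Mor L)) : Prop :=
  zz_ok z /\ exists z0 a b, z = z0 ++ [(a, b)] /\ dom b = v.

(** σ^a ∘ τ^b as a relation: g ↦ d iff b g = a d. *)
Definition step (p : Mor L * Mor L) (g d : Mor L) : Prop :=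
  cod g = dom (snd p) /\ cod d = dom (fst p) /\ comp (fst p) d = comp (snd p) g.

(** φ_ζ = σ^{α_1} τ^{β_1} ⋯ σ^{α_n} τ^{β_n} as a (partial functional) relation. *)
Fixpoint phi_rel (z : list (Mor L * Mor L)) (g d : Mor L) : Prop :=
  match z with
  | [] => g = d
  | p :: z' => exists m, phi_rel z' g m /\ step p m d
  end.

Definition Adom (z : list (Mor L * Mor L)) : mset := fun g => exists d, phi_rel z g d.

Definition D0 (v : Obj L) (E : mset) : Prop :=
  (exists x, E x) /\ exists z, zigzag_at v z /\ E = Adom z.

Inductive ring_gen (v : Obj L) : mset -> Prop :=
  | rg_base : forall E, D0 v E -> ring_gen v E
  | rg_empty : ring_gen v mset0
  | rg_union : forall A B, ring_gen v A -> ring_gen v B -> ring_gen v (msetU A B)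
  | rg_diff : forall A B, ring_gen v A -> ring_gen v B -> ring_gen v (msetD A B).

Definition D0_filter (v : Obj L) (C : mset -> Prop) : Prop :=
  (exists E, C E) /\
  (forall E, C E -> D0 v E) /\
  (forall E F, C E -> C F -> C (msetI E F)) /\
  (forall E F, C E -> D0 v F -> msubset E F -> C F).

Definition covers (F : list mset) (C : mset -> Prop) : Prop :=
  exists E, C E /\ msubset E (bigU F).

Definition vLstar (v : Obj L) (C : mset -> Prop) : Prop :=
  D0_filter v C /\
  forall F : list mset, (forall E, In E F -> D0 v E) ->
    (forall E, In E F -> ~ C E) -> ~ covers F C.

Definition Hof (v : Obj L) (C : mset -> Prop) : mset :=
  fun a => vL v a /\ C (aL a).

Definition Cof (v : Obj L) (H : mset) : mset -> Prop :=
  fun E => D0 v E /\ exists a, H a /\ msubset (aL a) E.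

Definition directed (H : mset) : Prop :=
  (exists a, H a) /\
  forall a b, H a -> H b -> exists g, H g /\ aL a g /\ aL b g.

Definition hereditary (H : mset) : Prop :=
  forall a g, H a -> aL g a -> H g.

Definition ring_filter (v : Obj L) (U : mset -> Prop) : Prop :=
  (exists A, U A) /\
  (forall A, U A -> ring_gen v A) /\
  ~ U mset0 /\
  (forall A B, U A -> U B -> U (msetI A B)) /\
  (forall A B, U A -> ring_gen v B -> msubset A B -> U B).

Definition ring_ultrafilter (v : Obj L) (U : mset -> Prop) : Prop :=
  ring_filter v U /\
  forall U', ring_filter v U' -> (forall A, U A -> U' A) -> forall A, U' A -> U A.

Definition UofC (v : Obj L) (C : mset -> Prop) : mset -> Prop :=
  fun A => ring_gen v A /\
    exists a, Hof v C a /\ msubset (msetI (Hof v C) (aL a)) A.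

End Defs.

(* Main.v *)
Require Import Defs.
From Stdlib Require Import List Classical FunctionalExtensionality PropExtensionality.
Import ListNotations.

Section S.
Context {L : LCSC}.
Implicit Types (v : Obj L) (E F : @mset L) (a b d e g h k m : Mor L) (K G : list (Mor L)) (z : list (Mor L * Mor L)).

Lemma mset_ext (A B : @mset L) : (forall x, A x <-> B x) -> A = B.
Proof. intros H; apply functional_extensionality; intro x; apply propositional_extensionality; auto. Qed.

Lemma fam_ext (P Q : @mset L -> Prop) : (forall E, P E <-> Q E) -> P = Q.
Proof. intros H; apply functional_extensionality; intro x; apply propositional_extensionality; auto. Qed.

Lemma aL_self (a : Mor L) : aL a a.
Proof. exists (idm (dom a)). split. apply idm_cod. symmetry; apply comp_id_r. Qed.

Lemma aL_cod (a g : Mor L) : aL a g -> cod g = cod a.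
Proof. intros [b [Hb ->]]. apply comp_cod; congruence. Qed.

Lemma aL_trans (a b g : Mor L) : aL a b -> aL b g -> aL a g.
Proof. intros [c [Hc ->]] [d [Hd ->]].
 rewrite comp_dom in Hd by congruence.
 exists (comp c d). split.
 - rewrite comp_cod; congruence.
 - rewrite comp_assoc; congruence.
Qed.

Lemma aL_idm (w : Obj L) (g : Mor L) : aL (idm w) g <-> cod g = w.
Proof. split.
 - intros H. apply aL_cod in H. rewrite idm_cod in H. auto.
 - intros H. exists g. rewrite idm_dom. split; auto. subst w. symmetry; apply comp_id_l.
Qed.

Lemma phi_app (l1 l2 : list (Mor L * Mor L)) g d :
  phi_rel (l1 ++ l2) g d <-> exists m, phi_rel l2 g m /\ phi_rel l1 m d.
Proof. revert g d; induction l1 as [|p l1 IH]; intros g d; simpl.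
 - split. intros H; exists d; auto. intros [m [H ->]]; auto.
 - split.
   + intros [m [H1 H2]]. apply IH in H1. destruct H1 as [m' [H3 H4]]. exists m'. split; auto. exists m; auto.
   + intros [m [H1 [m' [H2 H3]]]]. exists m'. split; auto. apply IH. exists m; auto.
Qed.

Lemma phi_dom (z : list (Mor L * Mor L)) g d : phi_rel z g d -> dom d = dom g.
Proof. revert d; induction z as [|[a b] z IH]; intros d; simpl.
 - intros ->; auto.
 - intros [m [H1 [H2 [H3 H4]]]]. simpl in *. rewrite <- (IH m H1).
   rewrite <- (comp_dom _ a d) by congruence. rewrite H4. apply comp_dom; congruence.
Qed.

Lemma phi_ideal (z : list (Mor L * Mor L)) g d h : phi_rel z g d -> cod h = dom g ->
  phi_rel z (comp g h) (comp d h).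
Proof. revert d; induction z as [|[a b] z IH]; intros d; simpl.
 - intros -> _; auto.
 - intros [m [H1 [H2 [H3 H4]]]] Hh. simpl in *. exists (comp m h). split; [apply IH; auto|].
   pose proof (phi_dom _ _ _ H1) as Hd.
   assert (dom d = dom m) as Hdm.
   { rewrite <- (comp_dom _ a d) by congruence. rewrite H4. apply comp_dom; congruence. }
   unfold step; simpl. split; [rewrite comp_cod; congruence|]. split; [rewrite comp_cod; congruence|].
   rewrite <- comp_assoc by congruence. rewrite H4. rewrite comp_assoc by congruence. auto.
Qed.

Lemma phi_inj (z : list (Mor L * Mor L)) g g' d : phi_rel z g d -> phi_rel z g' d -> g = g'.
Proof. revert d; induction z as [|[a b] z IH]; intros d; simpl.
 - congruence.
 - intros [m [H1 [H2 [H3 H4]]]] [m' [H1' [H2' [H3' H4']]]]. simpl in *.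
   assert (m = m'). { apply (left_cancel _ b); try congruence. }
   subst m'. eapply IH; eauto.
Qed.

Definition swp (p : Mor L * Mor L) := (snd p, fst p).
Definition inv (z : list (Mor L * Mor L)) := rev (map swp z).

Lemma phi_inv z g d : phi_rel (inv z) d g <-> phi_rel z g d.
Proof. revert d; induction z as [|[a b] z IH]; intros d.
 - simpl. split; auto.
 - unfold inv; simpl. fold (inv z). rewrite phi_app. simpl. split.
   + intros [m [[m' [<- Hs]] H2]]. exists m. split. apply IH; auto.
     unfold step in *; simpl in *. intuition.
   + intros [m [H1 Hs]]. exists m. split. exists d. split; auto.
     unfold step in *; simpl in *. intuition. apply IH; auto.
Qed.

Lemma Adom_inter z1 z2 g : Adom (z1 ++ inv z2 ++ z2) g <-> Adom z1 g /\ Adom z2 g.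
Proof. unfold Adom. split.
 - intros [d Hd]. apply phi_app in Hd. destruct Hd as [m [Hm Hd]].
   apply phi_app in Hm. destruct Hm as [m' [Hm' Hm]]. apply (proj1 (phi_inv z2 m m')) in Hm.
   pose proof (phi_inj _ _ _ _ Hm Hm'). subst m. eauto.
 - intros [[d Hd] [m Hm]]. exists d. apply phi_app. exists g. split; auto.
   apply phi_app. exists m. split; auto. apply (proj2 (phi_inv z2 g m)); auto.
Qed.

Definition hd_ok (b : Mor L) (l : list (Mor L * Mor L)) :=
  match l with [] => True | (a', _) :: _ => dom a' = dom b end.

Lemma zz_ok_app2 (l1 l2 : list (Mor L * Mor L)) : zz_ok l1 -> zz_ok l2 ->
  (forall l0 a b, l1 = l0 ++ [(a, b)] -> hd_ok b l2) -> zz_ok (l1 ++ l2).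
Proof. induction l1 as [|[a b] l1 IH]; intros H1 H2 H3; simpl; auto.
 simpl in H1. destruct H1 as [Hc [Hh Hz]]. split; auto. split.
 - destruct l1 as [|[x y] l1].
   + simpl. specialize (H3 [] a b eq_refl). destruct l2 as [|[x y] l2]; simpl in *; auto.
   + simpl. auto.
 - apply IH; auto. intros l0 x y E. apply (H3 ((a,b)::l0) x y). rewrite E; auto.
Qed.

Lemma inv_cons a b z : inv ((a,b)::z) = inv z ++ [(b,a)].
Proof. reflexivity. Qed.

Lemma inv_snoc a b z : inv (z ++ [(a,b)]) = (b,a) :: inv z.
Proof. unfold inv. rewrite map_app, rev_app_distr. reflexivity. Qed.

Lemma zz_ok_inv z : zz_ok z -> zz_ok (inv z).
Proof. induction z as [|[a b] z IH]; intros H; simpl; auto.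
 destruct H as [Hc [Hh Hz]]. rewrite inv_cons. apply zz_ok_app2; auto.
 - simpl. auto.
 - intros l0 x y E. destruct z as [|[a' b'] z].
   + simpl in E. destruct l0; simpl in E; discriminate.
   + rewrite inv_cons in E. apply app_inj_tail in E. destruct E as [_ E]. inversion E; subst.
     simpl. simpl in Hh. auto.
Qed.

Lemma zig_nonempty v z : zigzag_at v z -> exists a b z', z = (a,b)::z'.
Proof. intros [_ [z0 [a [b [E _]]]]]. destruct z as [|[x y] z'].
 - destruct z0; simpl in E; discriminate.
 - eauto.
Qed.

Lemma Adom_vL v z g : zigzag_at v z -> Adom z g -> vL v g.
Proof. intros [_ [z0 [a [b [E Hb]]]]] [d Hd]. subst z. apply phi_app in Hd.
 destruct Hd as [m [Hm _]]. simpl in Hm. destruct Hm as [m' [<- [H _]]]. unfold vL. simpl in H. congruence.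
Qed.

Lemma D0_vL v E g : D0 v E -> E g -> vL v g.
Proof. intros [_ [z [Hz ->]]]. apply Adom_vL; auto. Qed.

Lemma D0_ideal v E g h : D0 v E -> E g -> cod h = dom g -> E (comp g h).
Proof. intros [_ [z [Hz ->]]] [d Hd] Hh. exists (comp d h). apply phi_ideal; auto. Qed.

Lemma D0_ideal_aL v E g : D0 v E -> E g -> msubset (aL g) E.
Proof. intros HE Hg x [h [Hh ->]]. eapply D0_ideal; eauto. Qed.

Lemma D0_aL v a : cod a = v -> D0 v (aL a).
Proof. intros Ha. split; [exists a; apply aL_self|].
 exists [(a, idm v)]. split.
 - split. simpl. split; [rewrite idm_cod; auto|]. auto.
   exists [], a, (idm v). split; auto. apply idm_dom.
 - apply mset_ext. intros g. unfold Adom. simpl. split.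
   + intros [b [Hb ->]]. exists b. exists (comp a b). split; auto.
     unfold step; simpl. rewrite idm_dom. split; [rewrite comp_cod; congruence|]. split; auto.
     assert (cod (comp a b) = v) as Hc by (rewrite comp_cod; congruence).
     rewrite <- Hc, comp_id_l. auto.
   + intros [d [m [<- [H1 [H2 H3]]]]]. simpl in *. rewrite idm_dom in H1.
     exists d. split; auto. rewrite H3. rewrite <- H1. rewrite comp_id_l. auto.
Qed.

Lemma D0_inter v E F x : D0 v E -> D0 v F -> E x -> F x -> D0 v (msetI E F).
Proof. intros [_ [z1 [H1 ->]]] [_ [z2 [H2 ->]]] Ex Fx. split; [exists x; split; auto|].
 exists (z1 ++ inv z2 ++ z2). split.
 - destruct H1 as [Hz1 [z10 [a1 [b1 [E1 Hb1]]]]].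
   destruct H2 as [Hz2 [z20 [a2 [b2 [E2 Hb2]]]]].
   split.
   + apply zz_ok_app2; auto.
     * apply zz_ok_app2; auto. apply zz_ok_inv; auto.
       intros l0 x' y E. destruct z2 as [|[a' b'] z2'].
       -- destruct z20; simpl in E2; discriminate.
       -- rewrite inv_cons in E. apply app_inj_tail in E. destruct E as [_ E]. inversion E; subst x' y. simpl. auto.
     * intros l0 x' y E. rewrite E1 in E. apply app_inj_tail in E. destruct E as [_ E]. inversion E; subst x' y.
       rewrite E2, inv_snoc. simpl. congruence.
   + exists (z1 ++ inv z2 ++ z20), a2, b2. split; auto. rewrite E2 at 2. rewrite !app_assoc. auto.
 - apply mset_ext. intros g. rewrite Adom_inter. unfold msetI. tauto.
Qed.

Lemma list_choice {A B : Type} (R : A -> B -> Prop) (l : list A) :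
  (forall x, In x l -> exists y, R x y) -> exists l', Forall2 R l l'.
Proof. induction l as [|x l IH]; intros H.
 - exists []; constructor.
 - destruct (H x (or_introl eq_refl)) as [y Hy]. destruct IH as [l' Hl'].
   intros; apply H; right; auto. exists (y :: l'); constructor; auto.
Qed.

Lemma Forall2_in_l {A B : Type} (R : A -> B -> Prop) l l' x :
  Forall2 R l l' -> In x l -> exists y, In y l' /\ R x y.
Proof. induction 1; simpl; [tauto|]. intros [<-|Hin]; eauto.
 destruct (IHForall2 Hin) as [y' [? ?]]; eauto. Qed.

Lemma Forall2_in_r {A B : Type} (R : A -> B -> Prop) l l' y :
  Forall2 R l l' -> In y l' -> exists x, In x l /\ R x y.
Proof. induction 1; simpl; [tauto|]. intros [<-|Hin]; eauto.
 destruct (IHForall2 Hin) as [x' [? ?]]; eauto. Qed.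
Lemma step_pre1 (FA : @finitely_aligned L) a b k : exists G, forall m,
  (exists d, step (a,b) m d /\ aL k d) <-> exists e, In e G /\ aL e m.
Proof. destruct (classic (cod k = dom a)) as [Hk|Hk].
 - destruct (FA (comp a k) b) as [G0 HG0].
   destruct (list_choice (fun e e' => cod e' = dom b /\ e = comp b e') G0) as [G HG].
   { intros e He. assert (aL (comp a k) e /\ aL b e) as [_ [e' [? ?]]].
     { apply HG0. exists e; split; auto. apply aL_self. }
     eauto. }
   exists G. intros m. unfold step; simpl. split.
   + intros [d [[H1 [H2 H3]] [c [Hc ->]]]].
     assert (aL (comp a k) (comp b m) /\ aL b (comp b m)) as Hab.
     { split. exists c. split. rewrite comp_dom; congruence.
       rewrite <- H3. rewrite comp_assoc; congruence.
       exists m; split; auto. }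
     apply HG0 in Hab. destruct Hab as [e [He [c' [Hc' Hbm]]]].
     destruct (Forall2_in_l _ _ _ _ HG He) as [e' [He' [He'1 ->]]].
     exists e'. split; auto. exists c'. rewrite comp_dom in Hc' by congruence. split; auto.
     rewrite comp_assoc in Hbm by congruence.
     assert (cod (comp e' c') = dom b) by (rewrite comp_cod; congruence).
     apply left_cancel in Hbm; congruence.
   + intros [e' [He' [c [Hc ->]]]].
     destruct (Forall2_in_r _ _ _ _ HG He') as [e [He [He'1 ->]]].
     assert (aL (comp a k) (comp b (comp e' c)) /\ aL b (comp b (comp e' c))) as Hab.
     { apply HG0. exists (comp b e'). split; auto. exists c. split.
       rewrite comp_dom; congruence. rewrite comp_assoc; congruence. }
     destruct Hab as [[c'' [Hc'' Heq]] _]. rewrite comp_dom in Hc'' by congruence.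
     exists (comp k c''). split; [|exists c''; auto].
     split; [rewrite comp_cod; congruence|]. split; [rewrite comp_cod; congruence|].
     rewrite <- comp_assoc by congruence. congruence.
 - exists []. intros m. split.
   + intros [d [[H1 [H2 H3]] Hd]]. apply aL_cod in Hd. simpl in *. congruence.
   + intros [e [[] _]].
Qed.

Lemma step_pre (FA : @finitely_aligned L) a b K : exists G, forall m,
  (exists d, step (a,b) m d /\ exists k, In k K /\ aL k d) <-> exists e, In e G /\ aL e m.
Proof. induction K as [|k K IH].
 - exists []. intros m. split. intros [d [_ [k [[] _]]]]. intros [e [[] _]].
 - destruct (step_pre1 FA a b k) as [G1 H1]. destruct IH as [G2 H2].
   exists (G1 ++ G2). intros m. split.
   + intros [d [Hs [k' [[<-|Hin] Hk]]]].
     * destruct (proj1 (H1 m) (ex_intro _ d (conj Hs Hk))) as [e [He Hem]].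
       exists e; split; auto. apply in_or_app; auto.
     * destruct (proj1 (H2 m) (ex_intro _ d (conj Hs (ex_intro _ k' (conj Hin Hk))))) as [e [He Hem]].
       exists e; split; auto. apply in_or_app; auto.
   + intros [e [He Hem]]. apply in_app_or in He. destruct He as [He|He].
     * destruct (proj2 (H1 m) (ex_intro _ e (conj He Hem))) as [d [Hs Hk]].
       exists d. split; auto. exists k; split; simpl; auto.
     * destruct (proj2 (H2 m) (ex_intro _ e (conj He Hem))) as [d [Hs [k' [Hk' Hk]]]].
       exists d. split; auto. exists k'; split; simpl; auto.
Qed.

Lemma pre (FA : @finitely_aligned L) z : forall K, exists G, forall g,
  (exists d, phi_rel z g d /\ exists k, In k K /\ aL k d) <-> exists e, In e G /\ aL e g.
Proof. induction z as [|[a b] z IH]; intros K.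
 - exists K. intros g. simpl. split. intros [d [<- H]]; auto. intros H; exists g; auto.
 - destruct (step_pre FA a b K) as [G1 H1]. destruct (IH G1) as [G2 H2].
   exists G2. intros g. rewrite <- H2. simpl. split.
   + intros [d [[m [Hm Hs]] Hk]]. exists m. split; auto. apply H1. eauto.
   + intros [m [Hm Hk]]. apply H1 in Hk. destruct Hk as [d [Hs Hk]]. eauto.
Qed.

Lemma D0_union (FA : @finitely_aligned L) v E : D0 v E ->
  exists G, forall x, E x <-> exists e, In e G /\ aL e x.
Proof. intros HE. destruct HE as [_ [z [Hz ->]]].
 destruct (zig_nonempty _ _ Hz) as [a [b [z' ->]]].
 destruct (pre FA ((a,b)::z') [idm (dom a)]) as [G HG].
 exists G. intros x. rewrite <- HG. unfold Adom. split.
 - intros [d Hd]. exists d. split; auto. exists (idm (dom a)). split; simpl; auto.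
   apply aL_idm. simpl in Hd. destruct Hd as [m [_ [_ [H _]]]]. auto.
 - intros [d [Hd _]]. eauto.
Qed.
Lemma key (FA : @finitely_aligned L) v (C : @mset L -> Prop) (HC : vLstar v C) E :
  C E -> exists a, Hof v C a /\ msubset (aL a) E.
Proof. intros HCE. destruct HC as [[_ [HD0 [_ Hup]]] Hnc].
 pose proof (HD0 E HCE) as HE. destruct (D0_union FA v E HE) as [G HG].
 apply NNPP. intros Hno.
 assert (Hsub : forall e, In e G -> msubset (aL e) E).
 { intros e He x Hx. apply HG. eauto. }
 apply (Hnc (map aL G)).
 - intros E' HE'. apply in_map_iff in HE'. destruct HE' as [e [<- He]].
   apply D0_aL. apply (D0_vL v E e HE). apply (Hsub e He e (aL_self e)).
 - intros E' HE' HCE'. apply in_map_iff in HE'. destruct HE' as [e [<- He]].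
   apply Hno. exists e. split; [|apply Hsub; auto]. split; auto.
   apply (D0_vL v E e HE). apply (Hsub e He e (aL_self e)).
 - exists E. split; auto. intros x Hx. apply HG in Hx. destruct Hx as [e [He Hx]].
   exists (aL e). split; auto. apply in_map; auto.
Qed.

Lemma part1a (FA : @finitely_aligned L) v C : vLstar v C ->
  msubset (Hof v C) (vL v) /\ directed (Hof v C) /\ hereditary (Hof v C).
Proof. intros HC. pose proof HC as HC'. destruct HC' as [[[E0 HE0] [HD0 [Hint Hup]]] _].
 split; [intros x [Hx _]; auto|]. split; [split|].
 - destruct (key FA v C HC E0 HE0) as [a [Ha _]]. eauto.
 - intros a b [Ha HCa] [Hb HCb]. destruct (key FA v C HC _ (Hint _ _ HCa HCb)) as [g [Hg Hs]].
   exists g. split; auto. destruct (Hs g (aL_self g)). auto.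
 - intros a g [Ha HCa] Hga. assert (cod g = v) as Hg.
   { apply aL_cod in Hga. unfold vL in Ha. congruence. }
   split; auto. apply (Hup (aL a)); auto. apply D0_aL; auto.
   intros x Hx. eapply aL_trans; eauto.
Qed.

Lemma Cof_Hof (FA : @finitely_aligned L) v C : vLstar v C -> Cof v (Hof v C) = C.
Proof. intros HC. pose proof HC as HC'. destruct HC' as [[_ [HD0 [Hint Hup]]] _].
 apply fam_ext. intros E. split.
 - intros [HE [a [[_ Ha] Hs]]]. eapply Hup; eauto.
 - intros HE. split; auto. apply key; auto.
Qed.

Lemma part1c (FA : @finitely_aligned L) v H : msubset H (vL v) -> directed H -> hereditary H ->
      vLstar v (Cof v H) /\ Hof v (Cof v H) = H.
Proof. intros Hv [[a0 Ha0] Hdir] Hher. split; [split; [split|]|].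
 - exists (aL a0). split; [apply D0_aL; apply Hv; auto|]. exists a0. split; auto. intros x; auto.
 - split; [intros E [HE _]; auto|]. split.
   + intros E F [HE [a [Ha Hsa]]] [HF [b [Hb Hsb]]].
     destruct (Hdir a b Ha Hb) as [g [Hg [Hga Hgb]]].
     split. apply (D0_inter v E F g); auto.
     exists g. split; auto. intros x Hx. split; [apply Hsa|apply Hsb]; eapply aL_trans; eauto.
   + intros E F [HE [a [Ha Hsa]]] HF Hs. split; auto. exists a. split; auto.
     intros x Hx; auto.
 - intros F HF Hn [E [[HE [a [Ha Hsa]]] Hcov]].
   destruct (Hcov a (Hsa a (aL_self a))) as [E' [HE' HE'a]].
   apply (Hn E' HE'). split; auto. exists a. split; auto. eapply D0_ideal_aL; eauto.
 - apply mset_ext. intros a. split.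
   + intros [Ha [HD [b [Hb Hs]]]]. eapply Hher; eauto. apply Hs. apply aL_self.
   + intros Ha. split; [apply Hv; auto|]. split; [apply D0_aL; apply Hv; auto|].
     exists a. split; auto. intros x; auto.
Qed.

Lemma part1d (FA : @finitely_aligned L) v C1 C2 : vLstar v C1 -> vLstar v C2 ->
      ((forall E, C1 E -> C2 E) <-> msubset (Hof v C1) (Hof v C2)).
Proof. intros H1 H2. split.
 - intros Hs a [Ha HCa]. split; auto.
 - intros Hs E HE. rewrite <- (Cof_Hof FA v C2 H2). rewrite <- (Cof_Hof FA v C1 H1) in HE.
   destruct HE as [HE [a [Ha Hsa]]]. split; auto. exists a; auto.
Qed.
Lemma ring_inter v A B : ring_gen v A -> ring_gen v B -> ring_gen v (msetI A B).
Proof. intros HA HB. replace (msetI A B) with (msetD A (msetD A B)).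
 - apply rg_diff; auto. apply rg_diff; auto.
 - apply mset_ext. intros x. unfold msetD, msetI. tauto.
Qed.

Section Part2.
Variable FA : @finitely_aligned L.
Variable v : Obj L.
Variable C : @mset L -> Prop.
Hypothesis HC : vLstar v C.

Let H := Hof v C.

Lemma Hdir : directed H.
Proof. apply (part1a FA v C HC). Qed.

Lemma HvL : msubset H (vL v).
Proof. apply (part1a FA v C HC). Qed.

Lemma Cup E F : C E -> D0 v F -> msubset E F -> C F.
Proof. destruct HC as [[_ [_ [_ Hup]]] _]. apply Hup. Qed.

Lemma meetH E x : D0 v E -> H x -> E x -> C E.
Proof. intros HE [Hx HCx] Ex. apply (Cup (aL x)); auto. eapply D0_ideal_aL; eauto. Qed.

Lemma common b1 b2 : H b1 -> H b2 -> exists g, H g /\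
  (forall x, H x -> aL g x -> aL b1 x /\ aL b2 x).
Proof. intros H1 H2. destruct (proj2 Hdir b1 b2 H1 H2) as [g [Hg [G1 G2]]].
 exists g. split; auto. intros x _ Hx. split; eapply aL_trans; eauto. Qed.

Definition Pos (A : @mset L) := exists b, H b /\ msubset (msetI H (aL b)) A.
Definition Neg (A : @mset L) := exists b, H b /\ forall x, H x -> aL b x -> ~ A x.

Lemma dich A : ring_gen v A -> Pos A \/ Neg A.
Proof. destruct (proj1 Hdir) as [a0 Ha0].
 induction 1 as [E HE| |A B _ IHA _ IHB|A B _ IHA _ IHB].
 - destruct (classic (C E)) as [HCE|HCE].
   + left. destruct (key FA v C HC E HCE) as [a [Ha Hs]]. exists a. split; auto.
     intros x [_ Hx]; auto.
   + right. exists a0. split; auto. intros x Hx _ Ex. apply HCE. eapply meetH; eauto.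
 - right. exists a0. split; [auto|intros x _ _ []].
 - destruct IHA as [[b [Hb Hs]]|[b1 [Hb1 Hn1]]].
   + left. exists b. split; auto. intros x Hx. left; auto.
   + destruct IHB as [[b [Hb Hs]]|[b2 [Hb2 Hn2]]].
     * left. exists b. split; auto. intros x Hx. right; auto.
     * right. destruct (common b1 b2 Hb1 Hb2) as [g [Hg Hc]]. exists g. split; auto.
       intros x Hx Hgx [Ax|Bx]; destruct (Hc x Hx Hgx); [eapply Hn1|eapply Hn2]; eauto.
 - destruct IHA as [[b1 [Hb1 Hs1]]|[b [Hb Hn]]].
   + destruct IHB as [[b2 [Hb2 Hs2]]|[b2 [Hb2 Hn2]]].
     * right. exists b2. split; auto. intros x Hx Hbx [_ Bx]. apply Bx. apply Hs2. split; auto.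
     * left. destruct (common b1 b2 Hb1 Hb2) as [g [Hg Hc]]. exists g. split; auto.
       intros x [Hx Hgx]. destruct (Hc x Hx Hgx). split. apply Hs1; split; auto.
       eapply Hn2; eauto.
   + right. exists b. split; auto. intros x Hx Hbx [Ax _]. eapply Hn; eauto.
Qed.

Lemma UofC_filter : ring_filter v (UofC v C).
Proof. destruct (proj1 Hdir) as [a0 Ha0].
 assert (Hva0 : cod a0 = v) by (apply HvL; auto).
 split; [|split; [|split; [|split]]].
 - exists (aL a0). split. apply rg_base, D0_aL; auto. exists a0. split; auto. intros x [_ Hx]; auto.
 - intros A [HA _]; auto.
 - intros [_ [a [Ha Hs]]]. apply (Hs a). split; auto. apply aL_self.
 - intros A B [HA [a [Ha Hsa]]] [HB [b [Hb Hsb]]]. split. apply ring_inter; auto.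
   destruct (common a b Ha Hb) as [g [Hg Hc]]. exists g. split; auto.
   intros x [Hx Hgx]. destruct (Hc x Hx Hgx). split; [apply Hsa|apply Hsb]; split; auto.
 - intros A B [HA [a [Ha Hsa]]] HB Hs. split; auto. exists a. split; auto.
   intros x Hx; auto.
Qed.

Lemma filter_empty (U : @mset L -> Prop) A B : ring_filter v U -> U A -> U B ->
  (forall x, A x -> B x -> False) -> False.
Proof. intros [_ [_ [Hn [Hi _]]]] HA HB Hd. apply Hn.
 replace (@mset0 L) with (msetI A B); auto.
 apply mset_ext. intros x. unfold msetI, mset0. split; [intros [? ?]; eauto|intros []].
Qed.

Lemma UofC_ultra : ring_ultrafilter v (UofC v C).
Proof. split; [apply UofC_filter|]. intros U' HU' Hsub A HA.
 pose proof HU' as HU''. destruct HU'' as [_ [Hrg _]].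
 destruct (dich A (Hrg A HA)) as [HP|[b [Hb Hn]]]; [split; auto|].
 exfalso. assert (cod b = v) by (apply HvL; auto).
 assert (U' (msetD (aL b) A)).
 { apply Hsub. split. apply rg_diff; auto. apply rg_base, D0_aL; auto.
   exists b. split; [auto|]. intros x [Hx Hbx]. split; [auto|]. eapply Hn; eauto. }
 apply (filter_empty U' A (msetD (aL b) A)); auto. intros x Ax [_ nAx]; auto.
Qed.

Lemma UofC_D0 E : D0 v E -> (UofC v C E <-> C E).
Proof. intros HE. split.
 - intros [_ [a [Ha Hs]]]. apply (meetH E a); auto. apply Hs. split; auto. apply aL_self.
 - intros HCE. split. apply rg_base; auto. destruct (key FA v C HC E HCE) as [a [Ha Hs]].
   exists a. split; auto. intros x [_ Hx]; auto.
Qed.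

Lemma ultra_split (U : @mset L -> Prop) X Y : ring_ultrafilter v U -> U X -> ring_gen v Y ->
  U (msetI X Y) \/ U (msetD X Y).
Proof. intros [HU Hmax] HX HY. destruct HU as [Hne [Hrg [Hn0 [Hi Hup]]]].
 destruct (classic (U (msetD X Y))) as [HD|HD]; [right; auto|left].
 set (W := fun Z => ring_gen v Z /\ exists V, U V /\ msubset (msetI V Y) Z).
 assert (HW : ring_filter v W).
 { split; [|split; [|split; [|split]]].
   - exists (msetI X Y). split. apply ring_inter; auto. exists X. split; auto. intros x; auto.
   - intros Z [? _]; auto.
   - intros [_ [V [HV Hs]]]. apply HD. apply (Hup (msetI V X)); auto.
     apply rg_diff; auto. intros x [Vx Xx]. split; auto. intros Yx. apply (Hs x). split; auto.
   - intros A B [HA [V1 [H1 S1]]] [HB [V2 [H2 S2]]]. split. apply ring_inter; auto.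
     exists (msetI V1 V2). split; auto. intros x [[? ?] ?]. split; [apply S1|apply S2]; split; auto.
   - intros A B [HA [V [HV Hs]]] HB Hs'. split; auto. exists V. split; auto. intros x Hx; auto. }
 apply (Hmax W HW).
 - intros Z HZ. split; auto. exists Z. split; auto. intros x [? ?]; auto.
 - split. apply ring_inter; auto. exists X. split; auto. intros x; auto.
Qed.

Lemma PN (U : @mset L -> Prop) (HU : ring_ultrafilter v U) (HUC : forall E, D0 v E -> (U E <-> C E))
  A : ring_gen v A -> (Pos A -> U A) /\ (Neg A -> ~ U A).
Proof. pose proof HU as HU'. destruct HU' as [[_ [Hrg [Hn0 [Hi Hup]]]] _].
 induction 1 as [E HE| |A B HA IHA HB IHB|A B HA IHA HB IHB].
 - split.
   + intros [b [Hb Hs]]. apply HUC; auto. apply (meetH E b); auto. apply Hs. split; auto. apply aL_self.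
   + intros [b [Hb Hn]] HUE. apply HUC in HUE; auto. destruct (key FA v C HC E HUE) as [a [Ha Hs]].
     destruct (common a b Ha Hb) as [g [Hg Hc]]. destruct (Hc g Hg (aL_self g)).
     apply (Hn g); auto.
 - split; [|auto]. intros [b [Hb Hs]]. exfalso. apply (Hs b). split; auto. apply aL_self.
 - destruct IHA as [PA NA]. destruct IHB as [PB NB]. split.
   + intros [b [Hb Hs]]. destruct (dich A HA) as [HP|[b' [Hb' Hn]]].
     * apply (Hup A); auto. apply rg_union; auto. intros x; left; auto.
     * destruct (common b b' Hb Hb') as [g [Hg Hc]].
       assert (U B). { apply PB. exists g. split; auto. intros x [Hx Hgx].
         destruct (Hc x Hx Hgx). destruct (Hs x) as [?|?]; auto. split; auto.
         exfalso; eapply Hn; eauto. }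
       apply (Hup B); auto. apply rg_union; auto. intros x; right; auto.
   + intros [b [Hb Hn]] HAB.
     assert (nA : ~ U A). { apply NA. exists b. split; auto. intros x Hx Hbx Ax. apply (Hn x); auto. left; auto. }
     assert (nB : ~ U B). { apply NB. exists b. split; auto. intros x Hx Hbx Bx. apply (Hn x); auto. right; auto. }
     destruct (ultra_split U _ A HU HAB HA) as [K1|K1].
     * apply nA. apply (Hup _ A K1 HA). intros x [? ?]; auto.
     * apply nB. apply (Hup _ B K1 HB). intros x [[?|?] ?]; tauto.
 - destruct IHA as [PA NA]. destruct IHB as [PB NB]. split.
   + intros [b [Hb Hs]].
     assert (uA : U A). { apply PA. exists b. split; auto. intros x Hx. apply Hs; auto. }
     assert (nB : ~ U B). { apply NB. exists b. split; auto. intros x Hx Hbx Bx. destruct (Hs x); auto. split; auto. }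
     destruct (ultra_split U _ B HU uA HB) as [K2|K2]; auto.
     exfalso. apply nB. apply (Hup _ B K2 HB). intros x [? ?]; auto.
   + intros [b [Hb Hn]] HAB. destruct (dich A HA) as [[b' [Hb' Hs]]|HN].
     * destruct (common b b' Hb Hb') as [g [Hg Hc]].
       assert (uB : U B). { apply PB. exists g. split; auto. intros x [Hx Hgx].
         destruct (Hc x Hx Hgx). apply NNPP. intros nB. apply (Hn x); auto. split; auto.
         apply Hs; split; auto. }
       apply (filter_empty U _ B (proj1 HU) HAB uB). intros x [_ ?]; auto.
     * apply (NA HN). apply (Hup _ A HAB HA). intros x [? ?]; auto.
Qed.

Lemma unique (U : @mset L -> Prop) : ring_ultrafilter v U -> (forall E, D0 v E -> (U E <-> C E)) ->
        U = UofC v C.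
Proof. intros HU HUC.
 assert (S1 : forall A, UofC v C A -> U A).
 { intros A [HA HP]. apply (PN U HU HUC A HA). exact HP. }
 apply fam_ext. intros A. split; [|apply S1].
 intros HA. apply (proj2 UofC_ultra U (proj1 HU) S1 A HA).
Qed.

End Part2.

End S.

Theorem mainTheorem5 (L : LCSC) (v : Obj L) :
  @finitely_aligned L ->
  (* (1) C ↦ H(C) is a bijection vΛ^* → {directed hereditary H ⊆ vΛ}, inverse Cof *)
  ((forall C, vLstar v C ->
      msubset (Hof v C) (vL v) /\ directed (Hof v C) /\ hereditary (Hof v C)) /\
   (forall C, vLstar v C -> Cof v (Hof v C) = C) /\
   (forall H, msubset H (vL v) -> directed H -> hereditary H ->
      vLstar v (Cof v H) /\ Hof v (Cof v H) = H) /\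
   (forall C1 C2, vLstar v C1 -> vLstar v C2 ->
      ((forall E, C1 E -> C2 E) <-> msubset (Hof v C1) (Hof v C2)))) /\
  (* (2) the ultrafilter U_C of 𝒜_v with U_C ∩ 𝒟^{(0)}_v = C is UofC v C *)
  (forall C, vLstar v C ->
     (ring_ultrafilter v (UofC v C) /\
      (forall E, D0 v E -> (UofC v C E <-> C E))) /\
     (forall U, ring_ultrafilter v U -> (forall E, D0 v E -> (U E <-> C E)) ->
        U = UofC v C)).
Proof.
 intros FA. split; [split; [|split; [|split]]|].
 - intros C HC. apply part1a; auto.
 - intros C HC. apply Cof_Hof; auto.
 - intros H Hv Hd Hh. apply part1c; auto.
 - intros C1 C2 H1 H2. apply part1d; auto.
 - intros C HC. split; [split|].
   + apply UofC_ultra; auto.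
   + apply UofC_D0; auto.
   + intros U HU HUC. apply unique; auto.
Qed.
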